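(* Let $m\geq1$ and let $\{\Lambda_i\}_{i\geq1}$ be an infinite family of proper lattices in $\mathbb{Z}^m$ that are pairwise coprime. Then there is an infinite set $\{i_k\}_{k\geq1}$ of indices such that the integers $[\mathbb{Z}^m:\Lambda_{i_k}]$, $k\geq1$, are pairwise coprime.
   Context: A lattice in $\mathbb{Z}^m$ is a subgroup of finite index; it is proper if it is not $\mathbb{Z}^m$. Proper lattices $\Lambda,\Lambda'$ are coprime if $\Lambda+\Lambda'=\mathbb{Z}^m$. *)

(* Defs.v *)
From HB Require Import structures.
From mathcomp Require Import all_boot all_order all_algebra.
Set Implicit Arguments. Unset Strict Implicit. Unset Printing Implicit Defensive.
Import GRing.Theory Num.Theory.
Local Open Scope ring_scope.

Definition subgroupZ (m : nat) (L : 'rV[int]_m -> Prop) : Prop :=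
  L 0 /\ (forall x y, L x -> L y -> L (x - y)).

(* [Z^m : L] = n : there are exactly n cosets of L in Z^m, i.e. a complete
   irredundant system of n coset representatives. *)
Definition has_index (m : nat) (L : 'rV[int]_m -> Prop) (n : nat) : Prop :=
  exists f : 'I_n -> 'rV[int]_m,
    (forall x, exists i, L (x - f i)) /\
    (forall i j, L (f i - f j) -> i = j).

Definition lattice (m : nat) (L : 'rV[int]_m -> Prop) : Prop :=
  subgroupZ L /\ exists n : nat, has_index L n.

Definition proper_lattice (m : nat) (L : 'rV[int]_m -> Prop) : Prop :=
  lattice L /\ exists x, ~ L x.

Definition coprime_lattices (m : nat) (L L' : 'rV[int]_m -> Prop) : Prop :=
  forall x, exists a b, L a /\ L' b /\ x = a + b.

(* Main.v *)
Require Import Defs.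
From mathcomp Require Import all_boot all_order all_algebra all_fingroup.
From Stdlib Require Import ClassicalEpsilon Classical.
Set Implicit Arguments. Unset Strict Implicit. Unset Printing Implicit Defensive.
Import GRing.Theory Num.Theory.
Local Open Scope ring_scope.

Section Red.
Variable m k : nat.
Definition liftv (v : {ffun 'I_m -> 'I_k.+1}) : 'rV[int]_m := \row_j ((v j : nat)%:Z).
Definition redv (x : 'rV[int]_m) : {ffun 'I_m -> 'I_k.+1} :=
  [ffun j => inord (absz ((x ord0 j) %% (k.+1)%:Z)%Z)].
Definition quov (x : 'rV[int]_m) : 'rV[int]_m := \row_j ((x ord0 j) %/ (k.+1)%:Z)%Z.

Lemma liftredE x : x = liftv (redv x) + (k.+1)%:Z *: quov x.
Proof.
apply/rowP => j; rewrite !mxE ffunE.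
have h0 : (0 <= ((x ord0 j) %% (k.+1)%:Z)%Z) by rewrite modz_ge0.
have h1 : (((x ord0 j) %% (k.+1)%:Z)%Z < (k.+1)%:Z) by rewrite ltz_pmod.
rewrite inordK; last first.
  by rewrite -ltz_nat gez0_abs.
by rewrite gez0_abs // addrC mulrC -divz_eq.
Qed.

Lemma redliftE v : redv (liftv v) = v.
Proof.
apply/ffunP => j; rewrite ffunE mxE modz_small; last first.
  by rewrite lez_nat ltz_nat ltn_ord.
apply/val_inj => /=; rewrite inordK //; by case: (v j).
Qed.

Lemma redDK x y : redv (x + (k.+1)%:Z *: y) = redv x.
Proof.
apply/ffunP => j; rewrite !ffunE !mxE.
by rewrite addrC mulrC modzMDl.
Qed.

Lemma red_eq x y : redv x = redv y -> x - y = (k.+1)%:Z *: (quov x - quov y).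
Proof.
move=> e; rewrite {1}(liftredE x) {1}(liftredE y) e.
by rewrite scalerBr opprD addrACA subrr add0r.
Qed.
End Red.

Lemma gen (V : zmodType) (a b c d : V) : a - c = (a - (b + (c - d))) + (b - d).
Proof. rewrite opprD opprB -!addrA; congr (_ + _).
by rewrite [d + _]addrCA [d + (b - d)]addrC subrK addrCA addNr addr0. Qed.

Section Sub.
Variable m : nat.
Variable L : 'rV[int]_m -> Prop.
Hypothesis hs : subgroupZ L.

Lemma L0 : L 0. Proof. by case: hs. Qed.
Lemma LB x y : L x -> L y -> L (x - y). Proof. by case: hs => _; apply. Qed.
Lemma LN x : L x -> L (- x).
Proof. by move=> h; rewrite -sub0r; apply: LB => //; apply: L0. Qed.
Lemma LD x y : L x -> L y -> L (x + y).
Proof. by move=> hx hy; rewrite -[y]opprK; apply: LB => //; apply: LN. Qed.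
Lemma LZn (n : nat) x : L x -> L (n%:Z *: x).
Proof.
move=> hx; elim: n => [|n IH]; first by rewrite scale0r; apply: L0.
by rewrite -[n.+1]addn1 PoszD scalerDl scale1r; apply: LD.
Qed.
Lemma LZ (z : int) x : L x -> L (z *: x).
Proof.
move=> hx; case: z => n; first exact: LZn.
by rewrite NegzE scaleNr; apply: LN; apply: LZn.
Qed.

Variable n : nat.
Variable f : 'I_n -> 'rV[int]_m.
Hypothesis hcov : forall x, exists i, L (x - f i).
Hypothesis huniq : forall i j, L (f i - f j) -> i = j.

Lemma cls_uniq x i j : L (x - f i) -> L (x - f j) -> i = j.
Proof.
move=> hi hj; apply: huniq.
have -> : f i - f j = (x - f j) - (x - f i) by rewrite opprB [in RHS]addrC addrA subrK.
exact: LB.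
Qed.

Variable k : nat.
Hypothesis hK : forall y, L ((k.+1)%:Z *: y).

Lemma Llift (x : 'rV[int]_m) : L (liftv (redv k x) - x).
Proof.
rewrite {2}(liftredE k x) opprD addrA subrr add0r.
by apply: LN.
Qed.

Definition cls (v : {ffun 'I_m -> 'I_k.+1}) : 'I_n :=
  proj1_sig (constructive_indefinite_description _ (hcov (liftv v))).
Lemma clsP v : L (liftv v - f (cls v)).
Proof. by rewrite /cls; case: constructive_indefinite_description. Qed.

Definition phi (i j : 'I_n) (v : {ffun 'I_m -> 'I_k.+1}) := redv k (liftv v + (f j - f i)).

Lemma liftredE2 (x : 'rV[int]_m) : liftv (redv k x) = x + (- (k.+1)%:Z) *: quov k x.
Proof. by rewrite {2}(liftredE k x) scaleNr addrK. Qed.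

Lemma phiK i j : cancel (phi i j) (phi j i).
Proof.
move=> v; rewrite /phi liftredE2.
rewrite addrAC.
have -> : (- (k.+1)%:Z) *: quov k (liftv v + (f j - f i)) = (k.+1)%:Z *: (- quov k (liftv v + (f j - f i))).
  by rewrite scaleNr scalerN.
rewrite redDK -addrA.
by rewrite -[f i - f j]opprB subrr addr0 redliftE.
Qed.

Lemma cls_phi i j v : cls v = i -> cls (phi i j v) = j.
Proof.
move=> e; apply: (cls_uniq (clsP _)).
have -> : liftv (phi i j v) - f j =
  (liftv (redv k (liftv v + (f j - f i))) - (liftv v + (f j - f i))) + (liftv v - f i).
  by rewrite /phi -gen.
by apply: LD; [apply: Llift | rewrite -e; apply: clsP].
Qed.

Lemma card_fib i j : (#|[set v | cls v == i]| <= #|[set v | cls v == j]|)%N.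
Proof.
rewrite -(card_imset _ (can_inj (phiK i j))).
apply: subset_leq_card; apply/subsetP => w /imsetP [v].
by rewrite !inE => /eqP e ->; rewrite (cls_phi j e).
Qed.

Lemma index_dvd : (n %| (k.+1) ^ m)%N.
Proof.
have [i0 _] := hcov 0.
have e : #|{ffun 'I_m -> 'I_k.+1}| = (n * #|[set v | cls v == i0]|)%N.
  transitivity (\sum_(i < n) #|[set v | cls v == i]|)%N.
    rewrite -sum1_card (partition_big cls xpredT) //=.
    apply: eq_bigr => i _; rewrite -sum1_card; apply: eq_bigl => v.
    by rewrite inE.
  rewrite (eq_bigr (fun _ => #|[set v | cls v == i0]|)).
    by rewrite sum_nat_const card_ord.
  by move=> i _; apply/eqP; rewrite eqn_leq !card_fib.
by rewrite card_ffun !card_ord in e; rewrite e dvdn_mulr.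
Qed.
End Sub.

Lemma notdvd (m : nat) (L : 'rV[int]_m -> Prop) (hs : subgroupZ L)
  (n : nat) (f : 'I_n -> 'rV[int]_m)
  (hcov : forall x, exists i, L (x - f i))
  (huniq : forall i j, L (f i - f j) -> i = j)
  (p : nat) (hp : prime p)
  (hsurj : forall x, exists a y, L a /\ x = a + (p%:Z) *: y) :
  ~~ (p %| n)%N.
Proof.
have H : forall i, exists j, L (f i - p%:Z *: f j).
  move=> i; have [a [y [ha e]]] := hsurj (f i).
  have [j hj] := hcov y; exists j.
  have -> : f i - p%:Z *: f j = a + p%:Z *: (y - f j).
    by rewrite e scalerBr addrA.
  by apply: (LD hs) => //; apply: (LZ hs).
pose tau i := proj1_sig (constructive_indefinite_description _ (H i)).
have htau i : L (f i - p%:Z *: f (tau i)).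
  by rewrite /tau; case: constructive_indefinite_description.
have tau_inj : injective tau.
  move=> i i' e; apply: huniq.
  have -> : f i - f i' = (f i - p%:Z *: f (tau i)) - (f i' - p%:Z *: f (tau i')).
    by rewrite e opprB addrA subrK.
  by apply: (LB hs).
pose s := perm tau_inj.
have hk : forall k i, L (f i - (p%:Z ^+ k) *: f ((s ^+ k)%g i)).
  elim=> [|k IH] i.
    by rewrite expg0 perm1 expr0 scale1r subrr; apply: (L0 hs).
  rewrite expgSr permM permE.
  set j := (s ^+ k)%g i.
  have -> : f i - p%:Z ^+ k.+1 *: f (tau j) =
     (f i - p%:Z ^+ k *: f j) + p%:Z ^+ k *: (f j - p%:Z *: f (tau j)).
    by rewrite scalerBr scalerA -exprSr addrA subrK.
  by apply: (LD hs); [apply: IH | apply: (LZ hs)].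
set e := #[s]%g.
have he0 : (0 < e)%N by apply: order_gt0.
have hpe : (2 <= p ^ e)%N.
  apply: (leq_trans (prime_gt1 hp)); rewrite -{1}(expn1 p) leq_pexp2l //.
  exact: prime_gt0.
have hKi : forall i, L (((p ^ e)%N - 1)%:Z *: f i).
  move=> i; have := hk e i; rewrite expg_order perm1 => h.
  have -> : ((p ^ e)%N - 1)%:Z *: f i = - (f i - p%:Z ^+ e *: f i).
    rewrite opprB -[X in _ = _ - X]scale1r -scalerBl; congr (_ *: _).
    by rewrite -subzn ?expn_gt0 ?prime_gt0 // -natz natrX natz.
  by apply: (LN hs).
have hK : forall y, L (((p ^ e)%N - 2).+1%:Z *: y).
  move=> y; have -> : ((p ^ e)%N - 2).+1 = ((p ^ e)%N - 1)%N.
    by rewrite -subSn // subSS.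
  have [i hi] := hcov y.
  rewrite -(subrK (f i) y) scalerDr.
  by apply: (LD hs); [apply: (LZ hs) | apply: hKi].
have hd := index_dvd hs hcov huniq hK.
apply/negP => hpn.
have := dvdn_trans hpn hd; rewrite Euclid_dvdX // => /andP [hp1 _].
have : (p %| (p ^ e)%N - ((p ^ e)%N - 2).+1)%N.
  apply: dvdn_sub hp1; exact: dvdn_exp.
have -> : ((p ^ e)%N - ((p ^ e)%N - 2).+1)%N = 1%N.
  by rewrite -subSn // subSS subKn // ltnW.
by rewrite dvdn1 => /eqP p1; rewrite p1 in hp.
Qed.

Definition pb (P : Prop) : bool := if excluded_middle_informative P then true else false.
Lemma pbP (P : Prop) : pb P <-> P.
Proof. by rewrite /pb; case: excluded_middle_informative. Qed.

Definition Wset (m k : nat) (L : 'rV[int]_m -> Prop) : {set {ffun 'I_m -> 'I_k.+1}} :=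
  [set v | pb (exists a, L a /\ redv k a = v)].

Lemma W_surj (m k : nat) (L L' : 'rV[int]_m -> Prop) (hs : subgroupZ L)
  (hc : coprime_lattices L L') (hW : Wset k L = Wset k L') :
  forall x, exists a y, L a /\ x = a + (k.+1)%:Z *: y.
Proof.
move=> x; have [a [b [ha [hb ->]]]] := hc x.
have : redv k b \in Wset k L' by rewrite inE; apply/pbP; exists b.
rewrite -hW inE => /pbP [c [hcL hcb]].
exists (a + c), (quov k b - quov k c); split.
  exact: (LD hs).
rewrite -red_eq //.
by rewrite addrACA subrr addr0.
Qed.

Lemma bound (m : nat) (L : nat -> 'rV[int]_m -> Prop)
  (hsub : forall i, subgroupZ (L i))
  (hcop : forall i j, i <> j -> coprime_lattices (L i) (L j))
  (idx : nat -> nat) (hidx : forall i, has_index (L i) (idx i))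
  (p : nat) (hp : prime p) :
  exists B, forall i, (p %| idx i)%N -> (i < B)%N.
Proof.
have [k pk] : exists k, p = k.+1 by case: p hp => // k _; exists k.
have inj : forall i j, (p %| idx i)%N -> Wset k (L i) = Wset k (L j) -> i = j.
  move=> i j hpi hW; apply: NNPP => hij.
  have hsurj := W_surj (hsub i) (hcop i j hij) hW.
  have [f [hcov huniq]] := hidx i.
  have hsurj' : forall x, exists a y, L i a /\ x = a + p%:Z *: y by rewrite pk.
  by have := notdvd (hsub i) hcov huniq hp hsurj'; rewrite hpi.
have hh : forall v : {set {ffun 'I_m -> 'I_k.+1}}, exists i,
   (exists j, (p %| idx j)%N /\ Wset k (L j) = v) -> (p %| idx i)%N /\ Wset k (L i) = v.
  move=> v; case: (classic (exists j, (p %| idx j)%N /\ Wset k (L j) = v)).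
    by move=> [j hj]; exists j.
  by move=> hn; exists 0%N.
pose h v := proj1_sig (constructive_indefinite_description _ (hh v)).
have hP v : (exists j, (p %| idx j)%N /\ Wset k (L j) = v) -> (p %| idx (h v))%N /\ Wset k (L (h v)) = v.
  by rewrite /h; case: constructive_indefinite_description.
exists (\max_(v : {set {ffun 'I_m -> 'I_k.+1}}) h v).+1 => i hi.
have [h1 h2] := hP (Wset k (L i)) (ex_intro _ i (conj hi erefl)).
have -> : i = h (Wset k (L i)) by apply: inj.
by rewrite ltnS leq_bigmax.
Qed.
Local Close Scope ring_scope.

Theorem proposition3p16 (m : nat) (hm : (1 <= m)%N)
  (L : nat -> 'rV[int]_m -> Prop)
  (hproper : forall i, proper_lattice (L i))
  (hcop : forall i j, i <> j -> coprime_lattices (L i) (L j)) :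
  exists (s : nat -> nat) (idx : nat -> nat),
    (forall k l, (k < l)%N -> (s k < s l)%N) /\
    (forall k, has_index (L (s k)) (idx k)) /\
    (forall k l, k <> l -> coprime (idx k) (idx l)).
Proof.
have hsub i : subgroupZ (L i) by case: (hproper i) => [[]].
have hex i : exists n, has_index (L i) n by case: (hproper i) => [[_]].
pose idx0 i := proj1_sig (constructive_indefinite_description _ (hex i)).
have hidx i : has_index (L i) (idx0 i).
  by rewrite /idx0; case: constructive_indefinite_description.
have idx_gt0 i : (0 < idx0 i)%N.
  have [f [hcov _]] := hidx i; have [j _] := hcov 0%R.
  by case: (idx0 i) j => // -[].
have hB p : exists B, prime p -> forall i, (p %| idx0 i)%N -> (i < B)%N.
  case: (boolP (prime p)) => hp; last by exists 0%N.
  by have [B hB] := bound hsub hcop hidx hp; exists B.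
pose Bf p := proj1_sig (constructive_indefinite_description _ (hB p)).
have hBf p : prime p -> forall i, (p %| idx0 i)%N -> (i < Bf p)%N.
  by rewrite /Bf; case: constructive_indefinite_description.
pose nxt s P := (maxn s (\max_(q < P.+1) Bf q)).+1.
have nxt_gt s P : (s < nxt s P)%N by rewrite ltnS leq_maxl.
have nxt_cop s P : (0 < P)%N -> coprime (idx0 (nxt s P)) P.
  move=> P0; apply: contraT => hnc.
  set g := gcdn (idx0 (nxt s P)) P.
  have g1 : (1 < g)%N.
    by rewrite ltn_neqAle eq_sym hnc /= gcdn_gt0 P0 orbT.
  have pq := pdiv_prime g1.
  have hq1 : (pdiv g %| idx0 (nxt s P))%N := dvdn_trans (pdiv_dvd g) (dvdn_gcdl _ _).
  have hq2 : (pdiv g %| P)%N := dvdn_trans (pdiv_dvd g) (dvdn_gcdr _ _).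
  have hle : (pdiv g < P.+1)%N by rewrite ltnS dvdn_leq.
  have := hBf _ pq _ hq1.
  rewrite /nxt ltnNge => /negP h; exfalso; apply: h; apply: leqW.
  apply: (leq_trans _ (leq_maxr _ _)).
  by have := @leq_bigmax _ (fun q : 'I_P.+1 => Bf q) (Ordinal hle).
pose step (sp : nat * nat) := let i := nxt sp.1 sp.2 in (i, (sp.2 * idx0 i)%N).
pose st := fix st k := if k is k'.+1 then step (st k') else (0%N, idx0 0%N).
pose s k := (st k).1.
pose P k := (st k).2.
have sS k : s k.+1 = nxt (s k) (P k) by [].
have PS k : P k.+1 = (P k * idx0 (s k.+1))%N by [].
have P0 k : (0 < P k)%N.
  elim: k => [|k IH]; first exact: idx_gt0.
  by rewrite PS muln_gt0 IH idx_gt0.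
have hdvd k l : (k <= l)%N -> (idx0 (s k) %| P l)%N.
  move=> hkl; elim: l hkl => [|l IH].
    by rewrite leqn0 => /eqP ->.
  rewrite leq_eqVlt => /orP [/eqP ->| ]; first by rewrite PS dvdn_mull.
  by rewrite ltnS => /IH h; rewrite PS dvdn_mulr.
exists s, (fun k => idx0 (s k)); split; [|split].
- apply: (@homo_ltn _ s (fun a b => (a < b)%N) ltn_trans).
  by move=> i; rewrite sS.
- by move=> k; apply: hidx.
- have key k l : (k < l)%N -> coprime (idx0 (s k)) (idx0 (s l)).
    case: l => // l; rewrite ltnS => hkl.
    rewrite coprime_sym sS.
    apply: coprime_dvdr (hdvd _ _ hkl) _.
    by apply: nxt_cop.
  move=> k l hkl; case: (ltngtP k l) => h.
  + exact: key.
  + by rewrite coprime_sym; apply: key.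
  + by rewrite h in hkl.
Qed.
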